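(* For every integer $n\ge 1$, the polytope \[\mathrm{Newt}(U_n)=\sum_{1\le i<j\le n}\mathrm{conv}\{e_i+e_{n+j},\,e_j+e_{n+i}\}\subseteq\mathbb{R}^{2n}\] is unimodularly equivalent to the permutohedron $\Pi_n$.
   Context: Here $e_1,\dots,e_{2n}$ are the standard basis vectors of $\mathbb{R}^{2n}$ and the sum is a Minkowski sum; this is the sum of the Newton polytopes of the binomials $t_it_{n+j}-t_jt_{n+i}$, $1\le i<j\le n$ (the Newton polytope of a polynomial being the convex hull of its exponent vectors). The permutohedron is $\Pi_n=\mathrm{conv}\{(\pi_1,\dots,\pi_n): \pi\in\mathfrak{S}_n\}\subseteq\mathbb{R}^n$. Two polytopes $P,P'\subseteq\mathbb{R}^m$ are unimodularly equivalent if $P'=\{Mx+v: x\in P\}$ for some $M\in \mathrm{GL}_m(\mathbb{Z})$ and $v\in\mathbb{Z}^m$; if $P\subseteq\mathbb{R}^N$ and $P'\subseteq\mathbb{R}^m$ with $N>m$, they are called unimodularly equivalent if $P$ is unimodularly equivalent to $P'\times\{0\}\subseteq\mathbb{R}^N$. *)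

(* Defs.v *)
From HB Require Import structures.
From mathcomp Require Import all_boot all_order all_fingroup all_algebra.
Set Implicit Arguments. Unset Strict Implicit. Unset Printing Implicit Defensive.
Import Order.TTheory GRing.Theory Num.Theory.
Local Open Scope ring_scope.

Section Polytopes.
Variable R : realFieldType.

Definition conv m (S : seq 'cV[R]_m) : 'cV[R]_m -> Prop :=
  fun x => exists w : 'I_(size S) -> R,
    (forall i, 0 <= w i) /\ \sum_i w i = 1 /\ x = \sum_i w i *: S`_(val i).

Definition msum m (A B : 'cV[R]_m -> Prop) : 'cV[R]_m -> Prop :=
  fun x => exists a b, A a /\ B b /\ x = a + b.

Definition bigmsum m (L : seq ('cV[R]_m -> Prop)) : 'cV[R]_m -> Prop :=
  foldr (@msum m) (fun x => x = 0) L.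

Definition ev m (k : 'I_m) : 'cV[R]_m := delta_mx k 0.

(* Newt(U_n) = sum_{i<j} conv{e_i + e_{n+j}, e_j + e_{n+i}} in R^{2n} = R^{n+n};
   coordinate n+j is rshift n j. *)
Definition newtU (n : nat) : 'cV[R]_(n + n) -> Prop :=
  bigmsum [seq conv [:: ev (lshift n p.1) + ev (rshift n p.2);
                        ev (lshift n p.2) + ev (rshift n p.1)]
          | p <- filter (fun p : 'I_n * 'I_n => (p.1 < p.2)%N)
                     [seq (i, j) | i <- enum 'I_n, j <- enum 'I_n]].

Definition permutohedron (n : nat) : 'cV[R]_n -> Prop :=
  conv [seq \col_(k < n) (nat_of_ord (s k)).+1%:R | s : 'S_n <- enum [set: 'S_n]].

Definition pad0 m k (P : 'cV[R]_m -> Prop) : 'cV[R]_(m + k) -> Prop :=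
  fun y => exists x, P x /\ y = col_mx x 0.

Definition unimod_equiv m (P P' : 'cV[R]_m -> Prop) : Prop :=
  exists (M : 'M[int]_m) (v : 'cV[int]_m),
    M \in unitmx /\
    forall y, P' y <-> exists x, P x /\ y = map_mx intr M *m x + map_mx intr v.

End Polytopes.

(* Main.v *)
Require Import Defs.
From HB Require Import structures.
From mathcomp Require Import all_boot all_order all_fingroup all_algebra.
From mathcomp Require Import zify ring.
Set Implicit Arguments. Unset Strict Implicit. Unset Printing Implicit Defensive.
Import Order.TTheory GRing.Theory Num.Theory.

Section Comb.
Variable n : nat.

Definition Lfull : seq ('I_n * 'I_n) :=
  filter (fun p : 'I_n * 'I_n => (p.1 < p.2)%N)
     [seq (i, j) | i <- enum 'I_n, j <- enum 'I_n].

Lemma sumn_Lfull (F : 'I_n * 'I_n -> nat) :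
  \sum_(p <- Lfull) F p = \sum_(i < n) \sum_(j < n) (if (i < j)%N then F (i, j) else 0).
Proof.
rewrite big_filter big_mkcond big_allpairs big_enum /=.
by apply: eq_bigr => i _; rewrite big_enum.
Qed.

Lemma sum_ind (P : pred 'I_n) (i : 'I_n) : \sum_(k | P k) (k == i : nat) = P i.
Proof.
case Pi: (P i).
  rewrite (bigD1 i) //= eqxx big1 // => k /andP[_ /negbTE ->] //.
rewrite big1 // => k Pk; case: eqP => // e; by rewrite -e Pk in Pi.
Qed.

Lemma count_Lfull (A : {set 'I_n}) :
  count (fun p : 'I_n * 'I_n => (p.1 \in A) && (p.2 \in A)) Lfull = 'C(#|A|, 2).
Proof.
rewrite -sum1_count big_mkcond /= sumn_Lfull.
set T := \sum_i _.
have ET : T = \sum_(i in A) \sum_(j in A) (i < j : nat).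
  rewrite /T [RHS]big_mkcond /=; apply: eq_bigr => i _.
  case: (i \in A); last by rewrite big1 // => j _; case: ifP.
  rewrite [RHS]big_mkcond /=; apply: eq_bigr => j _.
  by case: (j \in A); case: (i < j)%N.
have ET' : T = \sum_(i in A) \sum_(j in A) (j < i : nat).
  by rewrite ET exchange_big.
have E2 : T + T = #|A| * (#|A|).-1.
  rewrite {1}ET ET' -big_split /= -sum_nat_const.
  apply: eq_bigr => i iA; rewrite -big_split /=.
  have H1 : \sum_(j in A) ((i < j)%N + (j < i)%N) + \sum_(j in A) (j == i : nat) = #|A|.
    rewrite -big_split /= -sum1_card; apply: eq_bigr => j _.
    case: (ltngtP i j) => [h|h|/val_inj ->]; rewrite ?eqxx ?ltnn //.
    - rewrite -val_eqE /= (gtn_eqF h); lia.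
    - rewrite -val_eqE /= (ltn_eqF h); lia.
  by rewrite sum_ind iA addn1 in H1; rewrite -H1.
rewrite bin2 -E2 addnn; exact: (esym (doubleK T)).
Qed.

Lemma size_Lfull : size Lfull = 'C(n, 2).
Proof.
have -> : 'C(n, 2) = 'C(#|[set: 'I_n]|, 2) by rewrite cardsT card_ord.
rewrite -count_Lfull -(count_predT Lfull).
by apply: eq_count => p; rewrite !in_setT.
Qed.

Lemma sum_ind_all (k : 'I_n) : \sum_(j < n) (j == k : nat) = 1.
Proof. exact: (sum_ind predT k). Qed.

Lemma sum_neq (k : 'I_n) : \sum_(j < n) (j != k : nat) = n.-1.
Proof.
have H : \sum_(j < n) (j != k : nat) + \sum_(j < n) (j == k : nat) = n.
  rewrite -big_split /= -[RHS]card_ord -sum1_card.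
  by apply: eq_bigr => j _; case: (j == k).
move: H; rewrite sum_ind_all; set S := \sum_(j < n) _; lia.
Qed.

Lemma sum_lt_gt (k : 'I_n) :
  \sum_(j < n) ((k < j)%N + (j < k)%N) = n.-1.
Proof.
rewrite -(sum_neq k); apply: eq_bigr => j _.
case: (ltngtP k j) => [h|h|/val_inj ->]; rewrite ?eqxx ?ltnn //.
- rewrite -val_eqE /= (gtn_eqF h); lia.
- rewrite -val_eqE /= (ltn_eqF h); lia.
Qed.

Lemma split2 (F G : 'I_n -> 'I_n -> nat) :
  \sum_(i < n) \sum_(j < n) (if (i < j)%N then F i j + G i j else 0) =
  \sum_(i < n) \sum_(j < n) (if (i < j)%N then F i j else 0) +
  \sum_(i < n) \sum_(j < n) (if (i < j)%N then G i j else 0).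
Proof.
rewrite -big_split /=; apply: eq_bigr => i _; rewrite -big_split /=.
by apply: eq_bigr => j _; case: ifP.
Qed.

Lemma first_part (k : 'I_n) (F : 'I_n -> 'I_n -> nat) :
  \sum_(i < n) \sum_(j < n) (if (i < j)%N then (i == k) * F i j else 0) =
  \sum_(j < n) (if (k < j)%N then F k j else 0).
Proof.
rewrite (bigD1 k) //= [X in (_ + X)%N]big1 ?addn0.
  by apply: eq_bigr => j _; rewrite eqxx mul1n.
move=> i /negbTE ik; apply: big1 => j _; rewrite ik mul0n; by case: ifP.
Qed.

Lemma second_part (k : 'I_n) (F : 'I_n -> 'I_n -> nat) :
  \sum_(i < n) \sum_(j < n) (if (i < j)%N then (j == k) * F i j else 0) =
  \sum_(i < n) (if (i < k)%N then F i k else 0).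
Proof.
rewrite exchange_big (bigD1 k) //= [X in (_ + X)%N]big1 ?addn0.
  by apply: eq_bigr => j _; rewrite eqxx mul1n.
move=> i /negbTE ik; apply: big1 => j _; rewrite ik mul0n; by case: ifP.
Qed.

Lemma deg_Lfull (k : 'I_n) :
  \sum_(p <- Lfull) ((p.1 == k) + (p.2 == k))%N = n.-1.
Proof.
rewrite sumn_Lfull.
have E : forall F : 'I_n -> 'I_n -> nat,
   \sum_(i < n) \sum_(j < n) (if (i < j)%N then F i j else 0) =
   \sum_(i < n) \sum_(j < n) (if (i < j)%N then F i j else 0) by [].
rewrite (split2 (fun i j => (i == k : nat)) (fun i j => (j == k : nat))).
have h1 := first_part k (fun _ _ => 1%N).
have h2 := second_part k (fun _ _ => 1%N).
rewrite /= in h1 h2.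
under eq_bigr do under eq_bigr do rewrite -[(_ == k : nat)]muln1.
under [X in _ + X]eq_bigr do under eq_bigr do rewrite -[(_ == k : nat)]muln1.
rewrite h1 h2 -(sum_lt_gt k) -big_split /=; apply: eq_bigr => j _.
by case: ltnP; case: ltnP.
Qed.

Lemma sum_lt_const c : (c <= n)%N -> \sum_(m < n) (m < c : nat) = c.
Proof.
move=> cn; rewrite -(big_mkord xpredT (fun m => (m < c : nat))).
rewrite (@big_cat_nat _ _ _ c 0 n) //=.
rewrite (eq_big_nat _ _ (F2 := fun _ => 1%N)); last by move=> i /andP[_ ->].
rewrite [X in (_ + X)%N](eq_big_nat _ _ (F2 := fun _ => 0%N)); last first.
  by move=> i /andP[ci _]; rewrite ltnNge ci.
by rewrite !sum_nat_const_nat muln0 muln1 addn0 subn0.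
Qed.

Lemma perm_Lfull (s : 'S_n) (k : 'I_n) :
  \sum_(p <- Lfull) ((p.1 == k) * (s p.2 < s p.1) + (p.2 == k) * (s p.1 < s p.2))%N = s k.
Proof.
rewrite sumn_Lfull.
rewrite (split2 (fun i j => ((i == k) * (s j < s i))%N) (fun i j => ((j == k) * (s i < s j))%N)).
rewrite (first_part k (fun i j => (s j < s i : nat))).
rewrite (second_part k (fun i j => (s i < s j : nat))).
have -> : (\sum_(j < n) (if (k < j)%N then (s j < s k : nat) else 0) +
          \sum_(i < n) (if (i < k)%N then (s i < s k : nat) else 0) =
          \sum_(j < n) (s j < s k : nat))%N.
  rewrite -big_split /=; apply: eq_bigr => j _.
  case: (ltngtP k j) => [h|h|/val_inj ->]; rewrite ?ltnn //.
  - by rewrite addn0.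
rewrite (reindex_inj (@perm_inj _ s^-1)) /=.
under eq_bigr do rewrite permKV.
by apply: sum_lt_const; apply: ltnW.
Qed.

End Comb.

Section Conv.
Variable R : realFieldType.
Local Open Scope ring_scope.

Lemma conv_convex m (S : seq 'cV[R]_m) x y t :
  conv S x -> conv S y -> 0 <= t <= 1 -> conv S (t *: x + (1 - t) *: y).
Proof.
move=> [w [w0 [w1 ->]]] [u [u0 [u1 ->]]] /andP[t0 t1].
exists (fun i => t * w i + (1 - t) * u i); split; [|split].
- move=> i; apply: addr_ge0; apply: mulr_ge0 => //; by rewrite subr_ge0.
- by rewrite big_split /= -!mulr_sumr w1 u1 !mulr1 addrC subrK.
- rewrite !scaler_sumr -big_split /=; apply: eq_bigr => i _.
  by rewrite [RHS]scalerDl !scalerA.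
Qed.

Lemma conv_mem m (S : seq 'cV[R]_m) i : (i < size S)%N -> conv S S`_i.
Proof.
move=> iS; exists (fun k : 'I_(size S) => ((k : nat) == i)%:R); split; [|split].
- by move=> k; rewrite ler0n.
- rewrite (bigD1 (Ordinal iS)) //= eqxx big1 ?addr0 // => k /negbTE.
  by rewrite -val_eqE /= => ->.
- rewrite (bigD1 (Ordinal iS)) //= eqxx scale1r big1 ?addr0 // => k /negbTE.
  by rewrite -val_eqE /= => ->; rewrite scale0r.
Qed.

Variable n : nat.

Lemma perm_in_Pi (s : 'S_n) : permutohedron (\col_k ((s k).+1)%:R : 'cV[R]_n).
Proof.
rewrite /permutohedron.
set P := enum [set: 'S_n].
have sP : s \in P by rewrite mem_enum in_setT.
have := conv_mem (S := [seq \col_(k < n) (nat_of_ord (s0 k)).+1%:R | s0 : 'S_n <- P])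
   (i := index s P).
rewrite size_map index_mem sP (nth_map s) ?index_mem // nth_index //.
by apply.
Qed.

Definition Landau (s : 'I_n -> nat) :=
  forall A : {set 'I_n}, ('C(#|A|, 2) <= \sum_(k in A) s k)%N.
Definition Total (s : 'I_n -> nat) := (\sum_k s k)%N = 'C(n, 2).

Lemma bound s : Landau s -> Total s -> forall k, (s k < n)%N.
Proof.
move=> L T k; have := L [set~ k].
rewrite cardsC1 card_ord.
have E : (\sum_(j in [set~ k]) s j = \sum_(j | j != k) s j)%N.
  by apply: eq_bigl => j; rewrite in_setC1.
rewrite E; move: T; rewrite /Total (bigD1 k) //=.
have nk : (0 < n)%N := leq_ltn_trans (leq0n k) (ltn_ord k).
have b : 'C(n, 2) = ('C(n.-1, 2) + n.-1)%N.
  by case: (n) nk => // n' _; rewrite binS bin1.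
have e : n = (n.-1).+1 by case: (n) nk.
rewrite b => H1 H2; suff: (s k <= n.-1)%N by rewrite -ltnS -e.
move: H1 H2; set X := (\sum_(j | j != k) s j)%N; lia.
Qed.

Definition upd (s : 'I_n -> nat) (i j : 'I_n) : 'I_n -> nat :=
  fun k => (s k + (k == i) - (k == j))%N.

Lemma upd_sum s i j (P : pred 'I_n) : i != j -> (0 < s j)%N ->
  (\sum_(k | P k) upd s i j k + P j = \sum_(k | P k) s k + P i)%N.
Proof.
move=> ij sj; rewrite -!sum_ind -!big_split /=; apply: eq_bigr => k _.
rewrite /upd; case: (eqVneq k j) => [->|kj]; last by rewrite subn0 addn0.
have ji : (j == i) = false by apply/negbTE; rewrite eq_sym.
rewrite ji /=; lia.
Qed.

Lemma upd_Landau s i j : i != j -> s i = s j -> (0 < s j)%N -> Landau s ->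
  Landau (upd s i j).
Proof.
move=> ij sij sj L A.
have E : (\sum_(k in A) upd s i j k + (j \in A) = \sum_(k in A) s k + (i \in A))%N.
  exact: (upd_sum (fun k => k \in A) ij sj).
case iA: (i \in A); case jA: (j \in A); rewrite ?iA ?jA /= in E.
- move: E (L A); set X := (\sum_(k in A) upd s i j k)%N; set Y := (\sum_(k in A) s k)%N; lia.
- move: E (L A); set X := (\sum_(k in A) upd s i j k)%N; set Y := (\sum_(k in A) s k)%N; lia.
-
  have HA := L A; have HB := L (A :\ j); have HC := L (i |: A).
  have cA : #|A| = (#|A :\ j|).+1 by rewrite (cardsD1 j A) jA.
  have cC : #|i |: A| = (#|A :\ j|).+2 by rewrite cardsU1 iA cA.
  rewrite big_setU1 /= in HC; last by rewrite iA.
  have sA : (\sum_(k in A) s k = s j + \sum_(k in A :\ j) s k)%N by rewrite (big_setD1 j).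
  move: HA HB HC E; rewrite cA cC sA; set m := #|A :\ j|.
  have b1 : 'C(m.+1, 2) = ('C(m, 2) + m)%N by rewrite binS bin1.
  have b2 : 'C(m.+2, 2) = ('C(m, 2) + m + m + 1)%N by rewrite binS bin1 b1; lia.
  rewrite b1 b2; set X := (\sum_(k in A) upd s i j k)%N; set Y := (\sum_(k in A :\ j) s k)%N; lia.
- move: E (L A); set X := (\sum_(k in A) upd s i j k)%N; set Y := (\sum_(k in A) s k)%N; lia.
Qed.

Lemma upd_Total s i j : i != j -> (0 < s j)%N -> Total s -> Total (upd s i j).
Proof.
move=> ij sj; rewrite /Total => T.
have := upd_sum predT ij sj; rewrite /= T; lia.
Qed.

Lemma upd_sq s i j : i != j -> s i = s j -> (0 < s j)%N ->
  (\sum_k (upd s i j k) ^ 2 = \sum_k (s k) ^ 2 + 2)%N.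
Proof.
move=> ij sij sj.
rewrite (bigD1 i) //= [in RHS](bigD1 i) //= (bigD1 j) /=; last by rewrite eq_sym.
rewrite [in RHS](bigD1 j) /=; last by rewrite eq_sym.
have -> : (\sum_(k | (k != i) && (k != j)) upd s i j k ^ 2 =
           \sum_(k | (k != i) && (k != j)) s k ^ 2)%N.
  apply: eq_bigr => k /andP[/negbTE ki /negbTE kj].
  by rewrite /upd ki kj addn0 subn0.
rewrite /upd eqxx (negbTE ij) eq_sym (negbTE ij) eqxx /=.
rewrite sij; nia.
Qed.

Definition vecs (s : 'I_n -> nat) : 'cV[R]_n := \col_k ((s k).+1)%:R.

Definition sumsq (s : 'I_n -> nat) := (\sum_k (s k) ^ 2)%N.

Lemma sumsq_bound s : Landau s -> Total s -> (sumsq s <= n * n * n)%N.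
Proof.
move=> L T; have -> : (n * n * n = \sum_(k < n) (n * n))%N.
  by rewrite big_const_ord iter_addn_0 mulnC.
rewrite /sumsq; apply: leq_sum => k _; have := bound L T k; nia.
Qed.

Lemma mid_case s :
  (forall s', Landau s' -> Total s' -> (sumsq s < sumsq s')%N -> permutohedron (vecs s')) ->
  Landau s -> Total s -> permutohedron (vecs s).
Proof.
move=> IH L T.
have B := bound L T.
pose f := fun k => Ordinal (B k).
case: (boolP (injectiveb f)) => [/injectiveP inj | /injectivePn [i [j ij fij]]].
  have := perm_in_Pi (perm inj).
  by congr permutohedron; apply/matrixP => k l; rewrite !mxE permE.
have sij : s i = s j by move: fij => /(congr1 val).
have sj : (0 < s j)%N.
  have := L [set i; j]; rewrite cards2 ij big_setU1 ?in_set1 //= big_set1 sij.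
  rewrite binn; lia.
have si : (0 < s i)%N by rewrite sij.
have ji : j != i by rewrite eq_sym.
have L1 := upd_Landau ij sij sj L.
have L2 := upd_Landau ji (esym sij) si L.
have T1 := upd_Total ij sj T.
have T2 := upd_Total ji si T.
have Q1 := upd_sq ij sij sj.
have Q2 := upd_sq ji (esym sij) si.
have P1 := IH _ L1 T1 ltac:(rewrite /sumsq Q1; lia).
have P2 := IH _ L2 T2 ltac:(rewrite /sumsq Q2; lia).
have := conv_convex P1 P2 (t := 2^-1) ltac:(by rewrite invr_ge0 ler0n invf_le1 ?ler1n ?ltr0n).
congr permutohedron; apply/matrixP => k l; rewrite !mxE.
have E : ((upd s i j k).+1 + (upd s j i k).+1 = (s k).+1 + (s k).+1)%N.
  rewrite /upd; case: (eqVneq k i) => [->|ki].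
    rewrite ?eqxx ?(negbTE ij) /=; lia.
  rewrite ?(negbTE ki); case: (eqVneq k j) => [->|kj].
    rewrite ?eqxx /=; lia.
  rewrite ?(negbTE kj) /=; lia.
have h2 : (1 - 2^-1 : R) = 2^-1 by rewrite {1}(splitr 1) mul1r addrK.
rewrite h2 -mulrDr -natrD E natrD -mulr2n -[X in _ * X]mulr_natl mulrA mulVf ?mul1r //.
by rewrite pnatr_eq0.
Qed.

Lemma mid N s : (n * n * n - sumsq s <= N)%N -> Landau s -> Total s ->
  permutohedron (vecs s).
Proof.
elim: N s => [|N IH] s HN; apply: mid_case => s' L' T' lt.
  have := sumsq_bound L' T'; lia.
apply: IH => //; have := sumsq_bound L' T'; lia.
Qed.

End Conv.

Section Geo.
Variable R : realFieldType.
Variable n : nat.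
Local Open Scope ring_scope.

Definition uu (p : 'I_n * 'I_n) : 'cV[R]_(n + n) := ev R (lshift n p.1) + ev R (rshift n p.2).
Definition vv (p : 'I_n * 'I_n) : 'cV[R]_(n + n) := ev R (lshift n p.2) + ev R (rshift n p.1).
Definition seg (p : 'I_n * 'I_n) := conv [:: uu p; vv p].

Lemma newtU_E : @newtU R n = bigmsum (map seg (Lfull n)).
Proof. by []. Qed.

Definition top (z : 'cV[R]_(n + n)) k := z (lshift n k) 0.
Definition bot (z : 'cV[R]_(n + n)) k := z (rshift n k) 0.

Lemma top_uu p k : top (uu p) k = (p.1 == k)%:R.
Proof. by rewrite /top /uu /ev !mxE ?eq_lrshift ?eq_rlshift ?eq_shift ?eqxx ?andbT ?andbF addr0 eq_sym. Qed.
Lemma top_vv p k : top (vv p) k = (p.2 == k)%:R.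
Proof. by rewrite /top /vv /ev !mxE ?eq_lrshift ?eq_rlshift ?eq_shift ?eqxx ?andbT ?andbF addr0 eq_sym. Qed.
Lemma bot_uu p k : bot (uu p) k = (p.2 == k)%:R.
Proof. by rewrite /bot /uu /ev !mxE ?eq_lrshift ?eq_rlshift ?eq_shift ?eqxx ?andbT ?andbF add0r eq_sym. Qed.
Lemma bot_vv p k : bot (vv p) k = (p.1 == k)%:R.
Proof. by rewrite /bot /vv /ev !mxE ?eq_lrshift ?eq_rlshift ?eq_shift ?eqxx ?andbT ?andbF add0r eq_sym. Qed.

Lemma seg_point p a : seg p a ->
  exists t, 0 <= t <= 1 /\ a = t *: uu p + (1 - t) *: vv p.
Proof.
move=> [w [w0 [w1 ->]]]; exists (w ord0); split.
  rewrite w0 /=; move: w1; rewrite big_ord_recl big_ord_recl big_ord0 addr0 => <-.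
  by rewrite lerDl w0.
move: w1; rewrite !big_ord_recl !big_ord0 !addr0 /= => w1.
by rewrite -w1 [w ord0 + _]addrC addrK.
Qed.

Lemma topD a b k : top (a + b) k = top a k + top b k.
Proof. by rewrite /top mxE. Qed.
Lemma botD a b k : bot (a + b) k = bot a k + bot b k.
Proof. by rewrite /bot mxE. Qed.
Lemma topZ t a k : top (t *: a) k = t * top a k.
Proof. by rewrite /top mxE. Qed.
Lemma botZ t a k : bot (t *: a) k = t * bot a k.
Proof. by rewrite /bot mxE. Qed.

Lemma fold_seg L x : bigmsum (map seg L) x -> forall k,
  top x k + bot x k = \sum_(p <- L) ((p.1 == k)%:R + (p.2 == k)%:R).
Proof.
elim: L x => [|p L IH] x /=.
  by move=> -> k; rewrite big_nil /top /bot !mxE addr0.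
move=> [a [b [/seg_point [t [_ ->]] [Hb ->]]]] k.
rewrite big_cons -(IH b Hb k) topD botD !topD !botD !topZ !botZ.
rewrite top_uu top_vv bot_uu bot_vv; ring.
Qed.

Lemma fold_newt x : newtU x -> forall k, top x k + bot x k = (n.-1)%:R.
Proof.
move=> Hx k; rewrite (fold_seg (L := Lfull n) Hx k) -(deg_Lfull k) natr_sum.
by apply: eq_bigr => p _; rewrite natrD.
Qed.

Lemma mem_bigmsum L (t : 'I_n * 'I_n -> R) : (forall p, 0 <= t p <= 1) ->
  bigmsum (map seg L) (\sum_(p <- L) (t p *: uu p + (1 - t p) *: vv p)).
Proof.
move=> ht; elim: L => [|p L IH] /=; first by rewrite big_nil.
rewrite big_cons; exists (t p *: uu p + (1 - t p) *: vv p), (\sum_(p <- L) (t p *: uu p + (1 - t p) *: vv p)).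
split; last by split.
exists (fun i : 'I_2 => if val i == 0%N then t p else 1 - t p); split; [|split].
- case/andP: (ht p) => h0 h1 [[|[|i]] Hi] //=; by rewrite subr_ge0.
- by rewrite !big_ord_recl big_ord0 /= addr0 addrC subrK.
- by rewrite !big_ord_recl big_ord0 /= addr0.
Qed.

Definition CC (z : 'cV[R]_(n + n)) := permutohedron (\col_k (top z k + 1)).

Lemma CC_convex a b t : CC a -> CC b -> 0 <= t <= 1 -> CC (t *: a + (1 - t) *: b).
Proof.
move=> Ha Hb ht; have := conv_convex Ha Hb ht.
rewrite /CC; congr permutohedron; apply/matrixP => k l.
rewrite !mxE /top !mxE; ring.
Qed.

Definition Inv (s : 'I_n -> nat) (L : seq ('I_n * 'I_n)) :=
  (forall A : {set 'I_n}, 'C(#|A|, 2) <=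
     \sum_(k in A) s k + count (fun p : 'I_n * 'I_n => (p.1 \in A) && (p.2 \in A)) L)%N
  /\ (\sum_k s k + size L = 'C(n, 2))%N.

Lemma Inv_step s p L (i : 'I_n) : (i == p.1) || (i == p.2) -> Inv s (p :: L) ->
  Inv (fun k => s k + (k == i))%N L.
Proof.
move=> hi [H1 H2]; split.
  move=> A; have := H1 A; rewrite big_split /= /=.
  have -> : (\sum_(k in A) (k == i : nat) = (i \in A))%N by exact: (sum_ind (fun k => k \in A) i).
  move: hi; case/orP => /eqP ->; case: (p.1 \in A); case: (p.2 \in A) => /=;
  set X := (\sum_(k in A) s k)%N; set Y := count _ L; lia.
move: H2; rewrite big_split /= sum_ind_all /=.
set X := (\sum_k s k)%N; lia.
Qed.

Lemma allv L : forall (c : 'cV[R]_(n + n)) s, (forall k, top c k = (s k)%:R) -> Inv s L ->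
  forall x, bigmsum (map seg L) x -> CC (c + x).
Proof.
elim: L => [|p L IH] c s hc hI x /=.
  move=> ->; rewrite addr0.
  case: hI => [H1 H2]; rewrite addn0 in H2.
  have L0 : Landau s by move=> A; have := H1 A; rewrite /= addn0.
  have := mid R (leqnn _) L0 H2.
  rewrite /CC /vecs; congr permutohedron; apply/matrixP => k l.
  by rewrite !mxE hc natr1.
move=> [a [b [/seg_point [t [ht ->]] [Hb ->]]]].
have Hu := IH (c + uu p) (fun k => s k + (k == p.1))%N.
have Hv := IH (c + vv p) (fun k => s k + (k == p.2))%N.
have Cu : CC (c + uu p + b).
  apply: Hu => //; last by apply: Inv_step hI; rewrite eqxx.
  by move=> k; rewrite topD hc top_uu natrD eq_sym.
have Cv : CC (c + vv p + b).
  apply: Hv => //; last by apply: Inv_step hI; rewrite eqxx orbT.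
  by move=> k; rewrite topD hc top_vv natrD eq_sym.
have := CC_convex Cu Cv ht.
have -> : t *: (c + uu p + b) + (1 - t) *: (c + vv p + b) =
          c + (t *: uu p + (1 - t) *: vv p + b).
  apply/matrixP => k l; rewrite !mxE; ring.
by [].
Qed.

Lemma top_sum (I : Type) (r : seq I) (F : I -> 'cV[R]_(n + n)) k :
  top (\sum_(i <- r) F i) k = \sum_(i <- r) top (F i) k.
Proof. by rewrite /top summxE. Qed.

Lemma perm_ind (s : 'S_n) (x y : 'I_n) : x != y ->
  ((s y < s x)%N + (s x < s y)%N = 1)%N.
Proof.
move=> xy; have : s x != s y by rewrite (inj_eq perm_inj).
rewrite -val_eqE /=; case: (ltngtP (s x) (s y)) => //.
Qed.

Lemma newt_top p : permutohedron p ->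
  exists x, newtU x /\ forall k, top x k + 1 = p k 0.
Proof.
rewrite /permutohedron.
set P := enum [set: 'S_n].
set F := fun s0 : 'S_n => \col_(k < n) (nat_of_ord (s0 k)).+1%:R : 'cV[R]_n.
have -> : [seq \col_(k < n) (nat_of_ord (s0 k)).+1%:R | s0 : 'S_n <- P] = map F P by [].
move=> [w [w0 [w1 ->]]].
pose sg (i : 'I_(size (map F P))) := nth 1%g P i.
have SE (i : 'I_(size (map F P))) : (map F P)`_i = F (sg i).
  by rewrite (nth_map 1%g) // -(size_map F); apply: ltn_ord.
pose t (q : 'I_n * 'I_n) := \sum_i w i * ((sg i q.2 < sg i q.1)%N)%:R.
have ht q : 0 <= t q <= 1.
  apply/andP; split; first by apply: sumr_ge0 => i _; apply: mulr_ge0; rewrite ?ler0n.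
  rewrite -w1; apply: ler_sum => i _; rewrite ler_piMr //; case: (_ < _)%N => //.
have ht1 q : q \in Lfull n -> 1 - t q = \sum_i w i * ((sg i q.1 < sg i q.2)%N)%:R.
  rewrite mem_filter => /andP[/= lq _].
  have qd : q.1 != q.2 by rewrite -val_eqE /= neq_ltn lq.
  rewrite -[X in X - t q]w1 /t -sumrB; apply: eq_bigr => i _.
  have := perm_ind (sg i) qd => /(congr1 (fun m => m%:R : R)); rewrite natrD mulr1n.
  set a := _%:R; set b := _%:R => E.
  have -> : b = 1 - a by rewrite -E [a + b]addrC addrK.
  ring.
exists (\sum_(q <- Lfull n) (t q *: uu q + (1 - t q) *: vv q)); split.
  by rewrite newtU_E; apply: mem_bigmsum.
move=> k; rewrite top_sum.
have -> : \sum_(q <- Lfull n) top (t q *: uu q + (1 - t q) *: vv q) k =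
  \sum_i w i * (sg i k)%:R.
  under [RHS]eq_bigr do rewrite -(perm_Lfull (sg _) k) natr_sum mulr_sumr.
  rewrite exchange_big /= big_seq [RHS]big_seq; apply: eq_bigr => q qL.
  rewrite topD !topZ top_uu top_vv (ht1 q qL) /t !mulr_suml -big_split /=.
  apply: eq_bigr => i _; rewrite natrD !natrM; ring.
rewrite summxE; under [RHS]eq_bigr do rewrite mxE SE mxE -natr1 mulrDr mulr1.
by rewrite big_split /= w1.
Qed.

Definition Mi : 'M[int]_(n + n) := block_mx 1%:M 0 1%:M 1%:M.
Definition vi : 'cV[int]_(n + n) := col_mx (const_mx 1) (const_mx (- (n.-1)%:Z)).

Lemma Mx (x : 'cV[R]_(n + n)) :
  map_mx intr Mi *m x + map_mx intr vi =
  col_mx (\col_k (top x k + 1)) (\col_k (top x k + bot x k - (n.-1)%:R)).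
Proof.
have M1 : map_mx intr (1%:M : 'M[int]_n) = (1%:M : 'M[R]_n).
  by apply/matrixP => i j; rewrite !mxE; case: (i == j).
have M0 : map_mx intr (0 : 'M[int]_n) = (0 : 'M[R]_n).
  by apply/matrixP => i j; rewrite !mxE.
rewrite -[x in _ *m x]vsubmxK /Mi /vi map_block_mx mul_block_col map_col_mx.
rewrite M1 M0 !mul1mx mul0mx addr0 add_col_mx.
congr col_mx; apply/matrixP => k l; rewrite !mxE /top /bot (ord1 l) //.
by rewrite intrN.
Qed.

Lemma Mi_unit : Mi \in unitmx.
Proof. by rewrite unitmxE /Mi det_lblock !det1 mulr1 unitr1. Qed.

End Geo.

Local Open Scope ring_scope.


Theorem mainTheorem3 (R : realFieldType) (n : nat) (hn : (1 <= n)%N) :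
  @unimod_equiv R (n + n) (@newtU R n) (@pad0 R n n (@permutohedron R n)).
Proof.
exists (Mi n), (vi n); split; first exact: Mi_unit.
move=> y; split.
  move=> [p [Pp ->]].
  have [x [Nx Tx]] := newt_top Pp.
  exists x; split => //; rewrite Mx; congr col_mx; apply/matrixP => k l.
    by rewrite !mxE (ord1 l) Tx.
  by rewrite !mxE (fold_newt Nx) subrr.
move=> [x [Nx ->]]; rewrite Mx.
exists (\col_k (top x k + 1)); split.
  have := @allv R n (Lfull n) 0 (fun _ => 0%N) _ _ x.
  rewrite add0r; apply => //.
  - by move=> k; rewrite /top mxE.
  - split.
      by move=> A; rewrite big1 // add0n count_Lfull.
    by rewrite big1 // add0n size_Lfull.
by congr col_mx; apply/matrixP => k l; rewrite !mxE (fold_newt Nx) subrr.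
Qed.
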